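(* For each integer $p\ge 2$ there is a constant $C_p>0$ such that for arbitrarily large $n$ (i.e. for infinitely many positive integers $n$) there exists a $(p-1)$-dimensional simplicial complex $\Gamma$ with $n$ vertices satisfying $\mathrm{gr}_{p-1}(\Gamma)>2p$ and $f_{p-1}(\Gamma)\ge C_p\,n^{\,p-\frac{p}{2^p-1}}$.
   Context: A simplicial complex $\Gamma$ on a finite vertex set $V=V(\Gamma)$ is a family of subsets of $V$ (faces) closed under taking subsets; its dimension is $\max\{|F|:F\in\Gamma\}-1$; $f_j(\Gamma)$ is the number of faces with $j+1$ elements. For $W\subseteq V$, $\Gamma[W]=\{F\in\Gamma:F\subseteq W\}$; for a face $F$ (possibly empty), $\mathrm{lk}_\Gamma(F)=\{G\setminus F: F\subseteq G\in\Gamma\}$. Fix a field $\mathbf{k}$; $\tilde H_j(\cdot;\mathbf{k})$ is reduced simplicial homology. The $(p-1)$-girth is $\mathrm{gr}_{p-1}(\Gamma)=\min\{|W|: W\subseteq V(\Gamma),\ \tilde H_{p-1}(\mathrm{lk}_\Gamma(F)[W];\mathbf{k})\neq 0 \text{ for some face } F\in\Gamma \text{ (including } F=\emptyset)\}$, or $\infty$ if none exists. *)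

(* Defs.v *)
From HB Require Import structures.
From mathcomp Require Import all_boot all_order all_algebra.
Set Implicit Arguments. Unset Strict Implicit. Unset Printing Implicit Defensive.
Import GRing.Theory.

Section SimplicialDefs.
Variable n : nat.
Notation family := {set {set 'I_n}}.

(* Simplicial complex on vertex set 'I_n: closed under subsets, and every
   element of 'I_n is a vertex (so the complex has exactly n vertices). *)
Definition is_simplicial_complex (G : family) : Prop :=
  (forall F H : {set 'I_n}, F \in G -> H \subset F -> H \in G) /\
  (forall v : 'I_n, [set v] \in G).

(* dimension = max |F| - 1 (as a nat, truncated; only used for positive dims) *)
Definition dimension (G : family) : nat := (\max_(F in G) #|F|).-1.

Definition fnum (G : family) (j : nat) : nat := #|[set F in G | #|F| == j.+1]|.

Definition induced (G : family) (W : {set 'I_n}) : family :=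
  [set F in G | F \subset W].

Definition link (G : family) (F : {set 'I_n}) : family :=
  [set H :\: F | H in [set H in G | F \subset H]].

Definition faces_of (G : family) (k : nat) : {set {set 'I_n}} :=
  [set F in G | #|F| == k].

(* Simplicial boundary map from (k+1)-element faces to k-element faces (chains
   as row vectors), vertices ordered by the natural order of 'I_n:
   d(s) = sum_{v in s} (-1)^{#{u in s | u < v}} (s \ v). *)
Definition bd_mx (K : fieldType) (G : family) (k : nat) :
  'M[K]_(#|faces_of G k.+1|, #|faces_of G k|) :=
  \matrix_(i < #|faces_of G k.+1|, j < #|faces_of G k|)
    (let s : {set 'I_n} := enum_val i in let t : {set 'I_n} := enum_val j in
     if (t \subset s) && (#|s :\: t| == 1%N)
     then ((-1) ^+ #|[set u in s | [exists v in s :\: t, (u < v)%N]]|)%R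
     else 0%R).

(* reduced homology H~_j(G; K) is nonzero: some j-cycle is not a boundary,
   i.e. ker d_j is not contained in im d_{j+1}.  (C_{-1} = K spanned by the
   empty face, so this is reduced homology.) *)
Definition rhom_nonzero (K : fieldType) (G : family) (j : nat) : bool :=
  ~~ (kermx (bd_mx K G j) <= bd_mx K G j.+1)%MS.

Definition girth_witness (K : fieldType) (G : family) (j : nat) (W : {set 'I_n}) : bool :=
  [exists F in G, rhom_nonzero K (induced (link G F) W) j].

(* gr_j(G): None encodes infinity *)
Definition girth (K : fieldType) (G : family) (j : nat) : option nat :=
  if [exists W, girth_witness K G j W]
  then Some (\big[minn/n.+1]_(W | girth_witness K G j W) #|W|)
  else None.
End SimplicialDefs.

Definition ext_gt (g : option nat) (m : nat) : bool :=
  if g is Some x then (m < x)%N else true.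

(* Main.v *)
Require Import Defs.
From HB Require Import structures.
From mathcomp Require Import all_boot all_order all_algebra.
From Stdlib Require Import Reals.
From Stdlib Require Import Lia Lra.

Module Hom.
Set Implicit Arguments. Unset Strict Implicit. Unset Printing Implicit Defensive.
Import GRing.Theory.
Local Open Scope ring_scope.


Lemma kermx_sub0 (K : fieldType) m k l (A : 'M[K]_(m, k)) (B : 'M[K]_(l, m)) :
  (forall u : 'rV[K]_m, (u *m A = 0) -> u = 0) -> (kermx A <= B)%MS.
Proof.
move=> H.
have -> : kermx A = 0.
  apply/row_matrixP => i; rewrite row0; apply: H.
  by rewrite -row_mul mulmx_ker row0.
exact: sub0mx.
Qed.

Lemma bd_inj (K : fieldType) n (G : {set {set 'I_n}}) (j : nat) :
  (forall s, s \in faces_of G j.+1 -> forall v, v \in s -> s :\ v \in G) ->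
  (forall Z : {set {set 'I_n}}, Z != set0 -> Z \subset faces_of G j.+1 ->
     exists2 s0, s0 \in Z & exists2 v, v \in s0 &
       forall s, s \in Z -> s0 :\ v \subset s -> s = s0) ->
  ~~ rhom_nonzero K G j.
Proof.
move=> Hcl Hcomb; rewrite /rhom_nonzero negbK; apply: kermx_sub0 => u Hu.
apply/eqP; apply/negPn/negP => Hu0.
set Z := [set enum_val i | i in [set i | u ord0 i != 0]].
have ZF : Z \subset faces_of G j.+1.
  by apply/subsetP => s /imsetP [i _ ->]; exact: enum_valP.
have Z0 : Z != set0.
  have [i Hi] : exists i, u ord0 i != 0.
    apply/existsP; apply: contraR Hu0 => /existsPn Hn.
    apply/eqP/rowP => i; rewrite mxE; exact/eqP/negPn/Hn.
  by apply/set0Pn; exists (enum_val i); apply/imsetP; exists i; rewrite ?inE.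
have [s0 Hs0 [v Hv Huniq]] := Hcomb Z Z0 ZF.
have s0F : s0 \in faces_of G j.+1 by apply: (subsetP ZF).
have tF : s0 :\ v \in faces_of G j.
  move: (s0F); rewrite !inE => /andP [_ /eqP c].
  rewrite Hcl //=; move: c; rewrite (cardsD1 v s0) Hv add1n => -[->]; by [].
case/imsetP: Hs0 => i1; rewrite inE => Hi1 Es0.
set jt := enum_rank_in tF (s0 :\ v).
have Ejt : enum_val jt = s0 :\ v by rewrite /jt enum_rankK_in.
move/rowP: Hu => /(_ jt); rewrite !mxE (bigD1 i1) //= big1.
  rewrite !mxE Ejt -Es0 /=.
  have -> : (s0 :\ v \subset s0) = true by apply: subD1set.
  have -> : #|s0 :\: (s0 :\ v)| == 1%N.
    have -> : s0 :\: (s0 :\ v) = [set v].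
      apply/setP => x; rewrite !inE; case: (x =P v) => [->|] /=; first by rewrite Hv.
      by case: (x \in s0).
    by rewrite cards1.
  move/eqP; rewrite addr0 mulf_eq0 signr_eq0 orbF; exact/negP.
move=> k Hk; rewrite !mxE Ejt /=.
case: (boolP (u ord0 k == 0)) => [/eqP -> | Huk]; first by rewrite mul0r.
case: (boolP (s0 :\ v \subset enum_val k)) => Hsub; last by rewrite /= mulr0.
have : enum_val k = s0.
  apply: Huniq => //; apply/imsetP; exists k; by rewrite ?inE.
rewrite Es0 => /enum_val_inj Ek; by rewrite Ek eqxx in Hk.
Qed.

End Hom.

Module Comb.
Import ssrnat.
Set Implicit Arguments. Unset Strict Implicit. Unset Printing Implicit Defensive.
Import Hom.
Definition vtx (p m : nat) (i : 'I_p) (x : 'I_m) : 'I_#|{: 'I_p * 'I_m}| :=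
  enum_rank (i, x).
Definition sig (p m : nat) (f : {ffun 'I_p -> 'I_m}) : {set 'I_#|{: 'I_p * 'I_m}|} :=
  [set vtx i (f i) | i : 'I_p].
Definition fupd (p m : nat) (f : {ffun 'I_p -> 'I_m}) (i : 'I_p) (y : 'I_m) :
  {ffun 'I_p -> 'I_m} := [ffun j => if j == i then y else f j].
Definition isbox (p m : nat) (ab : {ffun 'I_p -> 'I_m} * {ffun 'I_p -> 'I_m}) : bool :=
  [forall i, ab.1 i != ab.2 i].
Definition supp (p m : nat) (ab : {ffun 'I_p -> 'I_m} * {ffun 'I_p -> 'I_m}) :
  {set {ffun 'I_p -> 'I_m}} :=
  [set [ffun i => if s i then ab.2 i else ab.1 i] | s : {ffun 'I_p -> bool}].
Definition bads (p m : nat) (S : {set {ffun 'I_p -> 'I_m}}) :=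
  [set ab | isbox ab && (supp ab \subset S)].
Definition del (p m : nat) (S : {set {ffun 'I_p -> 'I_m}}) :=
  S :\: [set ab.1 | ab in bads S].

Lemma vtx_inj p m i j x y : @vtx p m i x = vtx j y -> i = j /\ x = y.
Proof. by move/enum_rank_inj => [-> ->]. Qed.

Lemma mem_sig p m (f : {ffun 'I_p -> 'I_m}) i x : (vtx i x \in sig f) = (f i == x).
Proof.
apply/imsetP/eqP => [[j _ /vtx_inj [-> ->]] //| <-]; by exists i.
Qed.

Lemma card_sig p m (f : {ffun 'I_p -> 'I_m}) : #|sig f| = p.
Proof.
rewrite /sig card_imset ?card_ord // => i j /vtx_inj []; by [].
Qed.

Lemma sig_inj p m : injective (@sig p m).
Proof.
move=> f g E; apply/ffunP => i; apply/eqP.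
by rewrite -mem_sig E mem_sig.
Qed.

Lemma mem_supp p m (ab : {ffun 'I_p -> 'I_m} * {ffun 'I_p -> 'I_m}) g :
  (g \in supp ab) = [forall i, (g i == ab.1 i) || (g i == ab.2 i)].
Proof.
apply/imsetP/forallP => [[s _ ->] i | H].
  by rewrite ffunE; case: (s i); rewrite eqxx ?orbT.
exists [ffun i => g i == ab.2 i] => //; apply/ffunP => i; rewrite !ffunE.
by case: (boolP (g i == ab.2 i)) => [/eqP //|]; move: (H i) => /orP [/eqP|->].
Qed.

Lemma fupd_eq p m (f : {ffun 'I_p -> 'I_m}) i y : fupd f i y i = y.
Proof. by rewrite ffunE eqxx. Qed.
Lemma fupd_neq p m (f : {ffun 'I_p -> 'I_m}) i j y : j != i -> fupd f i y j = f j.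
Proof. by rewrite ffunE => /negbTE ->. Qed.

Lemma core p m (S Zf : {set {ffun 'I_p -> 'I_m}}) (W : {set 'I_#|{: 'I_p * 'I_m}|}) :
  Zf \subset del S -> Zf != set0 -> #|W| <= 2 * p ->
  (forall f, f \in Zf -> sig f \subset W) ->
  (forall f, f \in Zf -> forall i, exists y, (y != f i) && (fupd f i y \in Zf)) ->
  False.
Proof.
move=> ZS Z0 HW HWf Hex.
case/set0Pn: Z0 => a aZ.
pose b := [ffun i => xchoose (Hex a aZ i)].
have hb i : (b i != a i) && (fupd a i (b i) \in Zf) by rewrite ffunE; exact: (xchooseP (Hex a aZ i)).
have sabW : sig a :|: sig b \subset W.
  rewrite subUset HWf //=; apply/subsetP => v /imsetP [i _ ->].
  have /andP [_ Hi] := hb i; apply: (subsetP (HWf _ Hi)).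
  by rewrite mem_sig fupd_eq.
have cD : #|sig a :|: sig b| = 2 * p.
  rewrite cardsU !card_sig.
  have -> : sig a :&: sig b = set0.
    apply/setP => v; rewrite !inE; apply/negP => /andP [/imsetP [i _ ->]].
    rewrite mem_sig; have /andP [Hb _] := hb i.
    by rewrite (negbTE Hb).
  by rewrite cards0 subn0 addnn mul2n.
have EW : sig a :|: sig b = W by apply/eqP; rewrite eqEcard sabW cD.
have HZ g i : g \in Zf -> (g i == a i) || (g i == b i).
  move=> gZ; have : vtx i (g i) \in W by apply: (subsetP (HWf _ gZ)); rewrite mem_sig.
  by rewrite -EW inE !mem_sig ![_ == g i]eq_sym.
have clos : forall k (g : {ffun 'I_p -> 'I_m}), #|[set i | g i != a i]| <= k -> g \in supp (a, b) -> g \in Zf.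
  elim=> [|k IH] g.
    rewrite leqn0 cards_eq0 => /eqP E _.
    have -> : g = a.
      apply/ffunP => i; apply/eqP; apply/negPn/negP => H.
      have : i \in set0 by rewrite -E inE.
      by rewrite inE.
    by [].
  case: (set_0Vmem [set i | g i != a i]) => [E | [i]].
    move=> _ _; have -> : g = a; last by [].
    apply/ffunP => i; apply/eqP; apply/negPn/negP => H.
    have : i \in set0 by rewrite -E inE.
      by rewrite inE.
  rewrite inE => Hi Hk Hg.
  have gib : g i = b i.
    by move: Hg; rewrite mem_supp => /forallP /(_ i) /orP [/eqP E|/eqP //]; rewrite E eqxx in Hi.
  set g0 := fupd g i (a i).
  have g0Z : g0 \in Zf.
    apply: IH.
      have : [set j | g0 j != a j] \proper [set j | g j != a j].
        apply/properP; split.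
          apply/subsetP => j; rewrite !inE; case: (j =P i) => [->|/eqP ne].
            by rewrite fupd_eq eqxx.
          by rewrite fupd_neq.
        by exists i; rewrite !inE ?fupd_eq ?eqxx.
      by move/proper_card => H; rewrite -ltnS; apply: leq_trans H Hk.
    rewrite mem_supp; apply/forallP => j; case: (j =P i) => [->|/eqP ne].
      by rewrite fupd_eq eqxx.
    by rewrite fupd_neq //; move: Hg; rewrite mem_supp => /forallP.
  have [y /andP [yne yZ]] := Hex g0 g0Z i.
  have yb : y = b i.
    move: (HZ _ i yZ); rewrite fupd_eq => /orP [/eqP E|/eqP //].
    by rewrite E /g0 fupd_eq eqxx in yne.
  have -> : g = fupd g0 i y; last by [].
  apply/ffunP => j; case: (j =P i) => [->|/eqP ne]; first by rewrite fupd_eq yb gib.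
  by rewrite !fupd_neq.
have suppZ : supp (a, b) \subset Zf.
  by apply/subsetP => g; apply: (clos #|'I_p|); apply: max_card.
have aS : a \in del S by apply: (subsetP ZS).
move: (aS); rewrite inE => /andP [/negP []]; apply/imsetP; exists (a, b) => //.
rewrite inE; apply/andP; split.
  by apply/forallP => i; have /andP [H _] := hb i; rewrite eq_sym.
apply: subset_trans suppZ _; apply: subset_trans ZS _; exact: subsetDl.
Qed.

Definition cplx (p m : nat) (S : {set {ffun 'I_p -> 'I_m}}) :
  {set {set 'I_#|{: 'I_p * 'I_m}|}} :=
  [set F : {set 'I_#|{: 'I_p * 'I_m}|} | (#|F| <= 1) || [exists f in S, F \subset sig f]].

Lemma cplx_closed p m (S : {set {ffun 'I_p -> 'I_m}}) (F H : {set 'I_#|{: 'I_p * 'I_m}|}) :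
  F \in cplx S -> H \subset F -> H \in cplx S.
Proof.
rewrite !inE => /orP [c|/exists_inP [f fS sub]] HF.
  by rewrite (leq_trans (subset_leq_card HF) c).
by apply/orP; right; apply/exists_inP; exists f => //; apply: subset_trans sub.
Qed.

Lemma cplx_sc p m (S : {set {ffun 'I_p -> 'I_m}}) : is_simplicial_complex (cplx S).
Proof.
split; first by move=> F H; apply: cplx_closed.
by move=> v; rewrite inE cards1.
Qed.

Lemma cplx_card p m (S : {set {ffun 'I_p -> 'I_m}}) (F : {set 'I_#|{: 'I_p * 'I_m}|}) :
  (1 <= p)%N -> F \in cplx S -> #|F| <= p.
Proof.
move=> p1; rewrite inE => /orP [c|/exists_inP [f fS sub]]; first exact: leq_trans c p1.
by rewrite -[X in _ <= X](card_sig f); apply: subset_leq_card.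
Qed.

Lemma cplx_top p m (S : {set {ffun 'I_p -> 'I_m}}) (F : {set 'I_#|{: 'I_p * 'I_m}|}) :
  (2 <= p)%N -> F \in cplx S -> #|F| = p -> exists2 f, f \in S & F = sig f.
Proof.
move=> p2; rewrite inE => /orP [c|/exists_inP [f fS sub]] cF.
  by move: (leq_trans p2 (leq_trans (eq_leq (esym cF)) c)).
exists f => //; apply/eqP; rewrite eqEcard sub card_sig cF leqnn //.
Qed.

Lemma sig_in p m (S : {set {ffun 'I_p -> 'I_m}}) f : f \in S -> sig f \in cplx S.
Proof. by move=> fS; rewrite inE; apply/orP; right; apply/exists_inP; exists f. Qed.

Lemma nohom (K : fieldType) p m (S : {set {ffun 'I_p -> 'I_m}}) (F W : {set 'I_#|{: 'I_p * 'I_m}|}) :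
  (2 <= p)%N -> #|W| <= 2 * p ->
  ~~ rhom_nonzero K (induced (link (cplx (del S)) F) W) (p - 1).
Proof.
move=> p2 HW.
have Ep : (p - 1).+1 = p by rewrite subn1 prednK // ltnW.
set G := cplx (del S).
have linkP s : reflect (exists2 H, (H \in G) && (F \subset H) & s = H :\: F)
    (s \in link G F).
  apply: (iffP imsetP) => [[H]|[H HH ->]]; first by rewrite inE => HH ->; exists H.
  by exists H => //; rewrite inE.
have topf s : s \in faces_of (induced (link G F) W) p ->
    (exists2 f, f \in del S & s = sig f) /\ s \subset W.
  rewrite !inE => /andP [/andP [/linkP [H /andP [HG FH] ->] sW] /eqP c]; split => //.
  have cH : #|H| = p.
    apply/eqP; rewrite eqn_leq (cplx_card (ltnW p2) HG) /= -{1}c.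
    exact: subset_leq_card (subsetDl _ _).
  have [f fS Hf] := cplx_top p2 HG cH.
  exists f => //; apply/eqP; rewrite eqEcard card_sig c leqnn andbT -Hf.
  exact: subsetDl.
apply: bd_inj; rewrite Ep.
  move=> s sF v vs; move: (sF); rewrite !inE => /andP [/andP [/linkP [H /andP [HG FH] Es] sW] _].
  apply/andP; split; last by apply: subset_trans sW; apply: subD1set.
  apply/linkP; exists (H :\ v).
    rewrite (cplx_closed HG (subD1set _ _)) /=; apply/subsetP => x xF.
    rewrite in_setD1 (subsetP FH) // andbT; apply/eqP => xv.
    by move: vs; rewrite Es inE -xv xF.
  by rewrite Es !setDDl setUC.
move=> Z Z0 ZF.
case: (boolP [exists s0 in Z, exists v in s0,
                 [forall s in Z, (s0 :\ v \subset s) ==> (s == s0)]]).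
  move=> /exists_inP [s0 s0Z /exists_inP [v vs /forall_inP H]].
  exists s0 => //; exists v => // s sZ sub; apply/eqP; move: (H s sZ); rewrite sub.
  by [].
move=> Hn; exfalso.
have topZ s : s \in Z -> (exists2 f, f \in del S & s = sig f) /\ s \subset W.
  by move=> sZ; apply: topf; apply: (subsetP ZF).
pose Zf := [set f | sig f \in Z].
apply: (@core p m S Zf W) => //.
- apply/subsetP => f; rewrite inE => fZ.
  by have [[g gS /sig_inj ->] _] := topZ _ fZ.
- case/set0Pn: Z0 => s sZ; have [[f _ Ef] _] := topZ _ sZ.
  by apply/set0Pn; exists f; rewrite inE -Ef.
- by move=> f; rewrite inE => fZ; have [_ ->] := topZ _ fZ.
move=> f; rewrite inE => fZ i.
move/exists_inPn: Hn => /(_ _ fZ) /exists_inPn /(_ (vtx i (f i))).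
rewrite mem_sig eqxx => /(_ isT) /forall_inPn [s sZ].
rewrite negb_imply => /andP [sub ne].
have [[g gS Eg] _] := topZ _ sZ.
have gj j : j != i -> g j = f j.
  move=> ji; apply/eqP; rewrite -mem_sig -Eg; apply: (subsetP sub).
  rewrite !inE mem_sig eqxx andbT; apply/negP => /eqP /vtx_inj [E _].
  by rewrite E eqxx in ji.
have Eu : fupd f i (g i) = g.
  apply/ffunP => j; case: (j =P i) => [->|/eqP ji]; first by rewrite fupd_eq.
  by rewrite fupd_neq // gj.
exists (g i); rewrite inE Eu -Eg sZ andbT.
apply: contra ne => /eqP gi; rewrite Eg; apply/eqP; congr sig.
apply/ffunP => j; case: (j =P i) => [->//|/eqP ji]; exact: gj.
Qed.

Lemma cplx_dim p m (S : {set {ffun 'I_p -> 'I_m}}) :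
  S != set0 -> (1 <= p)%N -> dimension (cplx S) = (p - 1)%N.
Proof.
move=> /set0Pn [f fS] p1; rewrite /dimension subn1; congr predn.
apply/eqP; rewrite eqn_leq; apply/andP; split.
  by apply/bigmax_leqP => F FG; exact: cplx_card p1 FG.
rewrite -[X in X <= _](card_sig f).
by rewrite (bigD1 (sig f)) ?sig_in //= leq_maxl.
Qed.

Lemma cplx_fnum p m (S : {set {ffun 'I_p -> 'I_m}}) :
  (2 <= p)%N -> fnum (cplx S) (p - 1) = #|S|.
Proof.
move=> p2; have Ep : (p - 1).+1 = p by rewrite subn1 prednK // ltnW.
rewrite /fnum Ep -(card_imset _ (@sig_inj p m)); congr (#|pred_of_set _|).
apply/setP => F; rewrite inE; apply/andP/imsetP.
  by move=> [FG /eqP cF]; have [f fS ->] := cplx_top p2 FG cF; exists f.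
by move=> [f fS ->]; rewrite sig_in // card_sig.
Qed.

Lemma cplx_girth (K : fieldType) p m (S : {set {ffun 'I_p -> 'I_m}}) :
  (2 <= p)%N -> (2 * p < #|{: 'I_p * 'I_m}|.+1)%N ->
  ext_gt (girth K (cplx (del S)) (p - 1)) (2 * p).
Proof.
move=> p2 hn; rewrite /girth; case: ifP => _ //=.
apply: (big_ind (fun x => 2 * p < x)) => //.
  by move=> x y hx hy; rewrite leq_min hx hy.
move=> W /existsP [F /andP [_ H]].
rewrite ltnNge; apply/negP => HW.
by move: H; rewrite (negbTE (@nohom K p m S F W p2 HW)).
Qed.
Lemma card_sumb (I : finType) (P : pred I) : #|[set i | P i]| = \sum_i (P i : nat).
Proof.
rewrite -sum1_card big_mkcond /=; apply: eq_bigr => i _; rewrite inE; by case: (P i).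
Qed.

Lemma double_count (I J : finType) (R : J -> I -> bool) :
  \sum_j #|[set i | R j i]| = \sum_i #|[set j | R j i]|.
Proof.
under eq_bigr do rewrite card_sumb.
rewrite exchange_big /=; apply: eq_bigr => i _; by rewrite card_sumb.
Qed.

Lemma cnt (T : finType) N (A : {set T}) :
  #|[set h : {ffun T -> 'I_N.+1} | [forall x in A, h x == ord0]]| = N.+1 ^ (#|T| - #|A|).
Proof.
pose F := fun x : T => if x \in A then pred1 (@ord0 N) else predT.
have -> : #|[set h : {ffun T -> 'I_N.+1} | [forall x in A, h x == ord0]]| = #|finfun.family F|.
  apply: eq_card => h; rewrite inE; apply/forall_inP/familyP => H x.
    by rewrite /F; case: ifP => xA //; rewrite inE; apply: H.
  by move=> xA; move: (H x); rewrite /F xA.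
rewrite card_family foldrE big_map big_enum /=.
rewrite (bigID (fun x => x \in A)) /= big1; last by move=> x xA; rewrite /F xA card1.
rewrite mul1n.
rewrite (eq_bigr (fun=> N.+1)); last first.
  move=> x xA; rewrite /F (negbTE xA) /=.
  by rewrite -[RHS](card_ord N.+1); apply: eq_card.
rewrite prod_nat_const; congr (_ ^ _).
by rewrite -(cardC A) addKn.
Qed.

Lemma card_supp p m (ab : {ffun 'I_p -> 'I_m} * {ffun 'I_p -> 'I_m}) :
  isbox ab -> #|supp ab| = 2 ^ p.
Proof.
move=> /forallP Hb; rewrite /supp card_imset ?card_ffun ?card_bool ?card_ord //.
move=> s1 s2 /ffunP E; apply/ffunP => i; move: (E i) (Hb i); rewrite !ffunE.
by case: (s1 i); case: (s2 i) => // ->; rewrite eqxx.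
Qed.

Lemma del_bound p m (S : {set {ffun 'I_p -> 'I_m}}) :
  #|S| <= #|del S| + #|bads S|.
Proof.
rewrite /del -[X in X <= _](cardsID [set ab.1 | ab in bads S]) addnC leq_add2l.
apply: leq_trans (subset_leq_card (subsetIr _ _)) _; exact: leq_imset_card.
Qed.

Lemma sum_S (T : finType) N :
  \sum_(h : {ffun T -> 'I_N.+1}) #|[set f | h f == ord0]| = #|T| * N.+1 ^ (#|T| - 1).
Proof.
rewrite (double_count (fun (h : {ffun T -> 'I_N.+1}) f => h f == ord0)).
rewrite -sum_nat_const /=; apply: eq_bigr => f _.
rewrite -(cards1 f) -cnt; apply: eq_card => h; rewrite !inE.
apply/eqP/forall_inP => [E x| H]; first by rewrite inE => /eqP ->; rewrite E.
by apply/eqP; apply: H; rewrite inE.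
Qed.

Lemma sum_bad p m N :
  \sum_(h : {ffun {ffun 'I_p -> 'I_m} -> 'I_N.+1}) #|bads [set f | h f == ord0]|
   <= #|{ffun 'I_p -> 'I_m}| ^ 2 * N.+1 ^ (#|{ffun 'I_p -> 'I_m}| - 2 ^ p).
Proof.
rewrite /bads (double_count (fun (h : {ffun {ffun 'I_p -> 'I_m} -> 'I_N.+1}) ab =>
   isbox ab && (supp ab \subset [set f | h f == ord0]))).
rewrite expnS expn1 -card_prod -sum_nat_const /= leq_sum // => ab _.
case: (boolP (isbox ab)) => Hb /=; last first.
  by rewrite (eq_card (B := pred0)) ?card0 // => h; rewrite inE.
rewrite -(card_supp Hb) -cnt leq_eqVlt; apply/orP; left; apply/eqP; apply: eq_card => h.
rewrite !inE; apply/subsetP/forall_inP => H x /H; by rewrite inE.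
Qed.

Lemma exists_good p m N :
  2 ^ p <= #|{ffun 'I_p -> 'I_m}| ->
  2 * #|{ffun 'I_p -> 'I_m}| <= N.+1 ^ (2 ^ p - 1) ->
  exists h : {ffun {ffun 'I_p -> 'I_m} -> 'I_N.+1},
    #|{ffun 'I_p -> 'I_m}| <= 2 * N.+1 * #|del [set f | h f == ord0]|.
Proof.
set t := #|{ffun 'I_p -> 'I_m}| => ht hE.
case: (boolP [exists h : {ffun {ffun 'I_p -> 'I_m} -> 'I_N.+1},
   t <= 2 * N.+1 * #|del [set f | h f == ord0]|]) => [/existsP //|/existsPn Hn].
exfalso.
have key (h : {ffun {ffun 'I_p -> 'I_m} -> 'I_N.+1}) : 2 * N.+1 * #|[set f | h f == ord0]| + 1 <=
             t + 2 * N.+1 * #|bads [set f | h f == ord0]|.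
  have := leq_mul (leqnn (2 * N.+1)) (del_bound [set f | h f == ord0]).
  rewrite mulnDr; move: (Hn h); rewrite -ltnNge.
  move: #|[set f | h f == ord0]| #|del [set f | h f == ord0]| #|bads [set f | h f == ord0]| => a b c.
  move=> /leP H1 /leP H2; apply/leP; rewrite -?multE -?plusE in H1 H2 *; lia.
have : \sum_(h : {ffun {ffun 'I_p -> 'I_m} -> 'I_N.+1})
   (2 * N.+1 * #|[set f | h f == ord0]| + 1) <=
   \sum_(h : {ffun {ffun 'I_p -> 'I_m} -> 'I_N.+1})
   (t + 2 * N.+1 * #|bads [set f | h f == ord0]|) by apply: leq_sum => h _; exact: key.
have cH : #|{ffun {ffun 'I_p -> 'I_m} -> 'I_N.+1}| = N.+1 ^ t.
  by rewrite card_ffun card_ord.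
have E1 : \sum_(h : {ffun {ffun 'I_p -> 'I_m} -> 'I_N.+1})
   (2 * N.+1 * #|[set f | h f == ord0]| + 1) = 2 * N.+1 * (t * N.+1 ^ (t - 1)) + N.+1 ^ t.
  by rewrite big_split -big_distrr sum_S sum_nat_const cH muln1.
have E2 : \sum_(h : {ffun {ffun 'I_p -> 'I_m} -> 'I_N.+1})
   (t + 2 * N.+1 * #|bads [set f | h f == ord0]|) =
   N.+1 ^ t * t + 2 * N.+1 * \sum_(h : {ffun {ffun 'I_p -> 'I_m} -> 'I_N.+1}) #|bads [set f | h f == ord0]|.
  by rewrite big_split -big_distrr sum_nat_const cH.
rewrite E1 E2; move: (sum_bad p m N); rewrite -/t => Hb.
have q1 : 0 < 2 ^ p by rewrite expn_gt0.
have t1 : 0 < t by apply: leq_trans q1 ht.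
have P1 : N.+1 ^ (t - 1) = N.+1 ^ (2 ^ p - 1) * N.+1 ^ (t - 2 ^ p).
  rewrite -expnD; congr (_ ^ _); move: ht q1; move: (2 ^ p) => q.
  move=> /leP ? /leP ?; rewrite -?minusE -?plusE; lia.
have P2 : N.+1 ^ t = N.+1 * N.+1 ^ (t - 1) by rewrite -expnS subn1 prednK.
rewrite P2 P1; rewrite expnS expn1 in Hb.
have hB := leq_mul (leqnn (2 * N.+1)) Hb.
have EX : 0 < N.+1 * N.+1 ^ (2 ^ p - 1) * N.+1 ^ (t - 2 ^ p) by rewrite !muln_gt0 !expn_gt0.
have hm := leq_mul (leq_mul hE (leqnn t)) (leqnn (N.+1 * N.+1 ^ (t - 2 ^ p))).
move: hB EX hm; move: (\sum_h _) (N.+1 ^ (2 ^ p - 1)) (N.+1 ^ (t - 2 ^ p)) => B E X.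
move=> /leP H1 /leP H2 /leP H3 /leP H4; rewrite -?multE -?plusE in H1 H2 H3 H4 *.
clear -H1 H2 H3 H4; move: (N.+1) H1 H2 H3 H4 => n1 H1 H2 H3 H4; lia.
Qed.

End Comb.

Module Real.
Import ssrnat.
Lemma INR_muln a b : INR (a * b) = (INR a * INR b)%R.
Proof. by rewrite -mult_INR. Qed.
Lemma INR_expn a b : INR (a ^ b) = (INR a ^ b)%R.
Proof. rewrite -pow_INR; congr INR; elim: b => //= b IH; by rewrite expnS IH. Qed.

Lemma real_part (p M e s : nat) : (2 <= p)%N -> (1 <= e)%N -> (2 <= M)%N ->
  (M ^ (e * p) <= 4 * M ^ p * s)%N ->
  (Rmult (/ (4 * INR p ^ p)) (Rpower (INR (p * M ^ e)) (Rminus (INR p) (Rdiv (INR p) (INR e))))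
    <= INR s)%R.
Proof.
move=> p2 e1 M2 H.
have Hk : (M ^ (e * p - p) <= 4 * s)%N.
  rewrite -(@leq_pmul2l (M ^ p)%N) ?expn_gt0 ?(leq_trans _ M2) //.
  rewrite -expnD subnKC ?leq_pmull //; first by rewrite mulnA (mulnC _ 4).
have pR : (0 < INR p)%R by apply: lt_0_INR; apply/ltP; apply: leq_trans p2.
have MR : (0 < INR M)%R by apply: lt_0_INR; apply/ltP; apply: leq_trans M2.
have eR : (0 < INR e)%R by apply: lt_0_INR; apply/ltP.
have ppR : (0 < INR p ^ p)%R by apply: pow_lt.
rewrite INR_muln INR_expn -Rpower_mult_distr ?pow_lt //.
rewrite -(@Rpower_pow e (INR M) MR) Rpower_mult.
have -> : (INR e * (INR p - INR p / INR e))%R = INR (e * p - p).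
  rewrite minus_INR; last by apply/leP; rewrite leq_pmull.
  rewrite INR_muln; field; lra.
rewrite Rpower_pow //.
have h1 : (Rpower (INR p) (INR p - INR p / INR e) <= INR p ^ p)%R.
  rewrite -Rpower_pow //; apply: Rle_Rpower.
    have : (1 <= p)%coq_nat by apply/leP; apply: ltnW.
    move/le_INR; by rewrite /= => ?.
  have : (0 <= INR p / INR e)%R by apply: Rmult_le_pos; [lra | apply: Rlt_le; apply: Rinv_0_lt_compat; lra].
  lra.
have h2 : (INR M ^ (e * p - p) <= 4 * INR s)%R.
  rewrite -INR_expn; have := le_INR _ _ (ssrnat.leP Hk); rewrite INR_muln.
  have -> : INR 4 = 4%R by simpl; lra.
  by [].
have h3 : (0 <= INR M ^ (e * p - p))%R by apply: pow_le; lra.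
apply: (Rle_trans _ (/ (4 * INR p ^ p) * (INR p ^ p * INR M ^ (e * p - p))))%R.
  apply: Rmult_le_compat_l; first by apply: Rlt_le; apply: Rinv_0_lt_compat; lra.
  by apply: Rmult_le_compat_r.
have -> : (/ (4 * INR p ^ p) * (INR p ^ p * INR M ^ (e * p - p)) = INR M ^ (e * p - p) / 4)%R.
  field; lra.
lra.
by apply: pow_lt.
Qed.

Lemma powE a b : Nat.pow a b = expn a b.
Proof. elim: b => //= b IH; by rewrite expnS IH. Qed.
End Real.

Module Fin.
Import ssrnat.
Lemma main_aux (K : fieldType) (p : nat) (hp : (2 <= p)%N) :
  exists C : R, Rlt 0 C /\
    forall N : nat, exists n : nat, (N <= n)%N /\ (0 < n)%N /\
      exists G : {set {set 'I_n}},
        is_simplicial_complex G /\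
        dimension G = (p - 1)%N /\
        ext_gt (girth K G (p - 1)) (2 * p) /\
        Rle (Rmult C (Rpower (INR n)
               (Rminus (INR p) (Rdiv (INR p) (INR (2 ^ p - 1))))))
            (INR (fnum G (p - 1))).
Proof.
have p1 : (0 < p)%N := ltnW hp.
set e := (2 ^ p - 1)%N.
have e1 : (0 < e)%N.
  rewrite /e subn_gt0 (leq_trans _ (leq_pexp2l (isT : 0 < 2)%N hp)) //.
have ppR : (0 < INR p ^ p)%R by apply: pow_lt; apply: lt_0_INR; apply/ltP.
exists (/ (4 * INR p ^ p))%R; split; first by apply: Rinv_0_lt_compat; lra.
move=> Nn.
pose M := Nn.+2.
have M2 : (2 <= M)%N by [].
have M0 : (0 < M)%N by [].
pose m := (M ^ e)%N.
have Mm : (M <= m)%N by rewrite /m -{1}(expn1 M) leq_pexp2l.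
pose N := (2 * M ^ p).-1.
have EN : N.+1 = (2 * M ^ p)%N by rewrite /N prednK // muln_gt0 expn_gt0 M0.
have ct : #|{ffun 'I_p -> 'I_m}| = (M ^ (e * p))%N by rewrite card_ffun !card_ord expnM.
have H1 : (2 ^ p <= #|{ffun 'I_p -> 'I_m}|)%N.
  rewrite ct; apply: (@leq_trans (2 ^ (e * p))); first by apply: leq_pexp2l => //; apply: leq_pmull.
  by rewrite leq_exp2r // muln_gt0 e1.
have H2 : (2 * #|{ffun 'I_p -> 'I_m}| <= N.+1 ^ (2 ^ p - 1))%N.
  rewrite ct EN -/e expnMn -expnM (mulnC p e); apply: leq_mul => //.
  by rewrite -{1}(expn1 2) leq_pexp2l.
have [h Hh] := Comb.exists_good H1 H2.
set S' := Comb.del [set f | h f == ord0] in Hh.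
rewrite ct EN in Hh.
exists #|{: 'I_p * 'I_m}|.
have cn : #|{: 'I_p * 'I_m}| = (p * m)%N by rewrite card_prod !card_ord.
split.
  rewrite cn; apply: (@leq_trans M); first by rewrite /M ltnW.
  by apply: (leq_trans Mm); apply: leq_pmull.
split; first by rewrite cn muln_gt0 p1 (leq_trans M0 Mm).
exists (Comb.cplx S').
split; first exact: Comb.cplx_sc.
split.
  apply: Comb.cplx_dim => //; rewrite -cards_eq0; apply/negP => /eqP E.
  by move: Hh; rewrite E muln0 leqn0 expn_eq0 /M.
split.
  apply: Comb.cplx_girth => //; rewrite cn ltnS mulnC leq_mul2l; apply/orP; right.
  exact: leq_trans M2 Mm.
rewrite Comb.cplx_fnum // cn.
apply: Real.real_part => //.
by move: Hh; rewrite !mulnA.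
Qed.
End Fin.

Unset Implicit Arguments.

Theorem mainTheorem15 (K : fieldType) (p : nat) (hp : (2 <= p)%N) :
  exists C : R, Rlt 0 C /\
    forall N : nat, exists n : nat, (N <= n)%N /\ (0 < n)%N /\
      exists G : {set {set 'I_n}},
        is_simplicial_complex G /\
        dimension G = (p - 1)%N /\
        ext_gt (girth K G (p - 1)) (2 * p) /\
        Rle (Rmult C (Rpower (INR n)
               (Rminus (INR p) (Rdiv (INR p) (INR (2 ^ p - 1))))))
            (INR (fnum G (p - 1))).
Proof.
rewrite Real.powE; exact: Fin.main_aux K p hp.
Qed.
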